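(* For every fixed $\alpha>1$ and $c>1$, $\mathrm{amls}(\alpha,c,x)$ is a continuous function of $x$ on the interval $(1,\infty)$.
   Context: Definition of amls: let $\mathcal{H}(x)=-x\ln x-(1-x)\ln(1-x)$ with $0\ln0=0$, $\mathcal{H}(0)=\mathcal{H}(1)=0$. For $\alpha,\beta,c\ge1$ define $\delta_{\alpha,\beta}(\kappa,\tau)=\frac{\frac{\beta}{\alpha}\kappa-\frac{\tau}{\alpha}}{1-\tau}$ if $\tau\ne1$ and $=\frac1\alpha$ if $\tau=1$; $\gamma_{\alpha,\beta}(\kappa,\tau)=(1-\frac\beta\alpha)\frac\kappa\tau+\frac1\alpha$ if $\tau\ne0$ and $=\frac1\alpha$ if $\tau=0$; $g_{\alpha,\beta,c}(\kappa,\tau)=\frac{\beta\kappa-\tau}{\alpha}\ln c-\tau\mathcal{H}(\gamma_{\alpha,\beta}(\kappa,\tau))-(1-\tau)\mathcal{H}(\delta_{\alpha,\beta}(\kappa,\tau))+\mathcal{H}(\kappa)$; $M_{\alpha,\beta}(\kappa)=\frac{\beta-\alpha}{1-\alpha\kappa}\kappa$ if $\alpha<\beta$, $0$ if $\alpha=\beta$, $\frac{\alpha-\beta}{\alpha-1}\kappa$ if $\alpha>\beta$. Then $\mathrm{amls}(\alpha,c,\beta)=\exp\left(\max_{0\le\kappa\le1/\beta}\ \min_{M_{\alpha,\beta}(\kappa)\le\tau\le\beta\kappa} g_{\alpha,\beta,c}(\kappa,\tau)\right)$. *)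

(* Defs.v *)
From HB Require Import structures.
From mathcomp Require Import all_boot all_order all_algebra.
From mathcomp Require Import all_classical all_reals all_analysis.
Set Implicit Arguments. Unset Strict Implicit. Unset Printing Implicit Defensive.
Import Order.TTheory GRing.Theory Num.Theory.
Local Open Scope classical_set_scope.
Local Open Scope ring_scope.

Section Amls.
Variable R : realType.

Definition Hent (x : R) : R :=
  (if x == 0 then 0 else - (x * ln x)) +
  (if 1 - x == 0 then 0 else - ((1 - x) * ln (1 - x))).

Definition delta_ab (a b k t : R) : R :=
  if t != 1 then (b / a * k - t / a) / (1 - t) else a^-1.

Definition gamma_ab (a b k t : R) : R :=
  if t != 0 then (1 - b / a) * (k / t) + a^-1 else a^-1.

Definition g_abc (a b c k t : R) : R :=
  (b * k - t) / a * ln c - t * Hent (gamma_ab a b k t)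
  - (1 - t) * Hent (delta_ab a b k t) + Hent k.

Definition M_ab (a b k : R) : R :=
  if a < b then (b - a) / (1 - a * k) * k
  else if a == b then 0
  else (a - b) / (a - 1) * k.

(* inner min over tau in [M, b k], outer max over kappa in [0, 1/b];
   realised as inf / sup of the corresponding value sets *)
Definition inner_min (a b c k : R) : R :=
  inf [set g_abc a b c k t | t in `[M_ab a b k, b * k]].

Definition amls (a c b : R) : R :=
  expR (sup [set inner_min a b c k | k in `[0, b^-1]]).

End Amls.

(* Main.v *)
Require Import Defs.
From HB Require Import structures.
From mathcomp Require Import all_boot all_order all_algebra.
From mathcomp Require Import all_classical all_reals all_analysis.
From mathcomp Require Import ring lra.
Import Order.TTheory GRing.Theory Num.Theory numFieldNormedType.Exports.
Local Open Scope classical_set_scope.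
Local Open Scope ring_scope.

Section Phi.
Variable R : realType.
Definition phi (x : R) : R := x * ln x.

Lemma phi0 : phi 0 = 0. Proof. by rewrite /phi mul0r. Qed.
Lemma phi1 : phi 1 = 0. Proof. by rewrite /phi ln1 mulr0. Qed.
Lemma phi_neg x : x <= 0 -> phi x = 0. Proof. by move=> h; rewrite /phi ln0 // mulr0. Qed.

Lemma HentE x : Hent x = - phi x - phi (1 - x).
Proof.
rewrite /Hent /phi; case: eqP => [->|_]; case: eqP => [->|_];
  by rewrite ?mul0r ?oppr0 ?sub0r ?subr0 ?add0r ?addr0.
Qed.

Lemma phi_le0 x : 0 <= x <= 1 -> phi x <= 0.
Proof. by case/andP=> h0 h1; rewrite /phi mulr_ge0_le0 // ln_le0. Qed.

Lemma phi_ge x : 0 <= x -> - 1 <= phi x.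
Proof.
move=> x0; have [->|xp] := eqVneq x 0; first by rewrite phi0 lerN10.
have xp' : 0 < x by rewrite lt_neqAle eq_sym xp x0.
have h := @ln_sublinear _ x^-1 ltac:(by rewrite invr_gt0).
rewrite lnV ?posrE // in h.
rewrite /phi -lerN2 opprK -mulrN.
have : x * (- ln x) <= x * x^-1 by rewrite ler_pM2l // ltW.
by rewrite mulfV.
Qed.

Lemma phi_small x : 0 < x -> - phi x <= 2 * Num.sqrt x.
Proof.
move=> x0; set y := Num.sqrt x.
have y0 : 0 < y by rewrite sqrtr_gt0.
have xy : x = y ^+ 2 by rewrite sqr_sqrtr // ltW.
have h := @ln_sublinear _ y^-1 ltac:(by rewrite invr_gt0).
rewrite lnV ?posrE // in h.
rewrite /phi xy lnXn // -mulrN -mulNrn.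
have : y ^+ 2 * (- ln y *+ 2) <= y ^+ 2 * (y^-1 *+ 2).
  by rewrite ler_pM2l ?exprn_gt0 // ler_pMn2r // ltW.
move/le_trans; apply; rewrite expr2 mulrnAr -mulrA mulfV ?gt_eqF // mulr1.
by rewrite mulr_natl.
Qed.

Lemma near_ballR (x : R) (P : R -> Prop) r : 0 < r ->
  (forall y, `|x - y| < r -> P y) -> \forall y \near x, P y.
Proof.
move=> r0 H; apply/nbhs_ballP; exists r => // y /=; exact: H.
Qed.

Lemma phi_cont x : {for x, continuous phi}.
Proof.
have [xn|xnn] := ltP x 0.
  apply/cvgrPdist_lt => e e0; apply/nbhs_ballP; exists (- x) => /=; first by lra.
  move=> y /= hy; have h := ler_norm (y - x); rewrite distrC in h.
  have y0 : y < 0 by lra.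
  by rewrite !phi_neg ?subrr ?normr0 // ltW.
have [x0|xp] := eqVneq x 0.
  subst x; apply/cvgrPdist_lt => e e0.
  apply/nbhs_ballP; exists (Num.min 1 ((e / 2) ^+ 2)) => /=.
    by rewrite lt_min ltr01 exprn_gt0 // divr_gt0.
  move=> y /=; rewrite sub0r normrN lt_min => /andP[y1 ye].
  rewrite phi0 sub0r normrN.
  have [yn|yp] := leP y 0; first by rewrite phi_neg ?normr0.
  rewrite ler0_norm; last by apply: phi_le0; rewrite (ltW yp) /=; have := ler_norm y; lra.
  have h1 := @phi_small y yp.
  rewrite gtr0_norm // in ye.
  have : Num.sqrt y < e / 2.
    by rewrite -(@ger0_norm _ (e/2)) ?divr_ge0 ?ltW // -sqrtr_sqr ltr_sqrt // exprn_gt0 // divr_gt0.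
  move=> h; lra.
have xp' : 0 < x by rewrite lt_neqAle eq_sym xp xnn.
rewrite /phi; apply: cvgM; first exact: cvg_id.
exact: continuous_ln.
Qed.

Lemma cvg_phi T (F : set_system T) (FF : Filter F) (f : T -> R) y :
  f @ F --> y -> (fun x => phi (f x)) @ F --> phi y.
Proof. move=> h; exact: (continuous_cvg _ (phi_cont y)). Qed.

Lemma cvg_p11 (q : (R * R) * R) : (fun p : (R * R) * R => p.1.1) @ nbhs q --> q.1.1.
Proof. exact: (cvg_comp fst fst (@cvg_fst _ _ _ _ _) (@cvg_fst _ _ _ _ _)). Qed.
Lemma cvg_p12 (q : (R * R) * R) : (fun p : (R * R) * R => p.1.2) @ nbhs q --> q.1.2.
Proof. exact: (cvg_comp fst snd (@cvg_fst _ _ _ _ _) (@cvg_snd _ _ _ _ _)). Qed.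
Lemma cvg_p2 (q : (R * R) * R) : (fun p : (R * R) * R => p.2) @ nbhs q --> q.2.
Proof. exact: (@cvg_snd _ _ _ _ _). Qed.
End Phi.
Arguments phi {R}.

Section Main.
Variables (R : realType) (a c : R).

Definition Gf (b k t : R) : R :=
  (b * k - t) / a * ln c
  - (phi t - phi ((1 - b / a) * k + t / a) - phi (t - ((1 - b / a) * k + t / a)))
  - (phi (1 - t) - phi ((b * k - t) / a) - phi (1 - t - (b * k - t) / a))
  - phi k - phi (1 - k).

Definition Phi (b s t : R) : R := Gf b (s / b) t.

Lemma Phi_cvg T (F : set_system T) (FF : Filter F) (fb fs ft : T -> R) b0 s0 t0 :
  b0 != 0 -> fb @ F --> b0 -> fs @ F --> s0 -> ft @ F --> t0 ->
  (fun x => Phi (fb x) (fs x) (ft x)) @ F --> Phi b0 s0 t0.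
Proof.
move=> b00 hb hs ht; rewrite /Phi /Gf.
repeat match goal with
 | |- (fun _ => ?C) @ _ --> _ => apply: cvg_cst
 | |- (fun x => fb x) @ _ --> _ => exact: hb
 | |- (fun x => fs x) @ _ --> _ => exact: hs
 | |- (fun x => ft x) @ _ --> _ => exact: ht
 | |- (fun x => @?A x + @?B x) @ _ --> _ => apply: cvgD
 | |- (fun x => @?A x * @?B x) @ _ --> _ => apply: cvgM
 | |- (fun x => - @?A x) @ _ --> _ => apply: cvgN
 | |- (fun x => phi (@?A x)) @ _ --> _ => apply: cvg_phi
 | |- (fun x => (@?A x)^-1) @ _ --> _ => apply: cvgV; first exact: b00
 end.
all: first [exact: hb | exact: hs | exact: ht].
Qed.

Lemma Phi_cont (q : (R * R) * R) : q.1.1 != 0 ->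
  {for q, continuous (fun p : (R * R) * R => Phi p.1.1 p.1.2 p.2)}.
Proof.
move=> q0; apply: Phi_cvg => //; [exact: cvg_p11 | exact: cvg_p12 | exact: cvg_p2].
Qed.

Lemma Phi_ed b0 s0 t0 : b0 != 0 -> forall e, 0 < e ->
  exists2 r, 0 < r & forall b s t, `|b0 - b| < r -> `|s0 - s| < r -> `|t0 - t| < r ->
    `|Phi b0 s0 t0 - Phi b s t| < e.
Proof.
move=> b00 e e0.
have := @Phi_cont ((b0, s0), t0) b00.
move/cvgrPdist_lt => /(_ e e0) /nbhs_ballP [r r0 H].
exists r => // b s t hb hs ht.
exact: (H ((b, s), t)).
Qed.
End Main.


Section Main.
Variables (R : realType) (a c : R).

Definition mm (b s : R) : R := M_ab a b (s / b).

Lemma mmE b s : 1 < a -> 1 < b -> 0 <= s <= 1 ->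
  mm b s = if a < b then (b - a) * s / (b - a * s)
           else if a == b then 0 else (a - b) * s / ((a - 1) * b).
Proof.
move=> a1 b1 /andP[s0 s1]; rewrite /mm /M_ab.
case: (ltgtP a b) => ab.
- have h : 0 < b - a * s by nra.
  by field; apply/andP; split; apply/lt0r_neq0; lra.
- by field; apply/andP; split; apply/lt0r_neq0; lra.
- by [].
Qed.

Lemma mm_bounds b s : 1 < a -> 1 < b -> 0 <= s <= 1 -> 0 <= mm b s <= s.
Proof.
move=> a1 b1 hs; rewrite mmE //; case/andP: hs => s0 s1.
case: (ltgtP a b) => ab.
- have h : 0 < b - a * s by nra.
  apply/andP; split; first by apply: divr_ge0; nra.
  rewrite ler_pdivrMr //.
  have : 0 <= a * (s * (1 - s)) by apply: mulr_ge0; [lra|apply: mulr_ge0; lra].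
  nra.
- have h : 0 < (a - 1) * b by apply: mulr_gt0; lra.
  apply/andP; split; first by apply: divr_ge0; nra.
  rewrite ler_pdivrMr //.
  have : 0 <= s * (a * (b - 1)) by apply: mulr_ge0 => //; apply: mulr_ge0; lra.
  nra.
- by rewrite lexx.
Qed.

Lemma ed2 (f : R -> R -> R) b0 s0 :
  {for (b0, s0), continuous (fun p : R * R => f p.1 p.2)} ->
  forall e, 0 < e -> exists2 r, 0 < r & forall b s, `|b0 - b| < r -> `|s0 - s| < r ->
    `|f b0 s0 - f b s| < e.
Proof.
move=> H0 e e0.
move/cvgrPdist_lt: H0 => /(_ e e0) /nbhs_ballP [r r0 H].
exists r => // b s hb hs.
exact: (H (b, s)).
Qed.

Lemma f1_cvg T (F : set_system T) (FF : Filter F) (fb fs : T -> R) b0 s0 :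
  b0 - a * s0 != 0 -> fb @ F --> b0 -> fs @ F --> s0 ->
  (fun x => (fb x - a) * fs x / (fb x - a * fs x)) @ F --> (b0 - a) * s0 / (b0 - a * s0).
Proof.
move=> h hb hs.
repeat match goal with
 | |- (fun _ => ?C) @ _ --> _ => apply: cvg_cst
 | |- (fun x => @?A x + @?B x) @ _ --> _ => apply: cvgD
 | |- (fun x => @?A x * @?B x) @ _ --> _ => apply: cvgM
 | |- (fun x => - @?A x) @ _ --> _ => apply: cvgN
 | |- (fun x => (@?A x)^-1) @ _ --> _ => apply: cvgV; first exact: h
 end.
all: first [exact: hb | exact: hs].
Qed.

Lemma f3_cvg T (F : set_system T) (FF : Filter F) (fb fs : T -> R) b0 s0 :
  b0 != 0 -> a - 1 != 0 -> fb @ F --> b0 -> fs @ F --> s0 ->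
  (fun x => (a - fb x) * fs x / ((a - 1) * fb x)) @ F --> (a - b0) * s0 / ((a - 1) * b0).
Proof.
move=> h h' hb hs.
repeat match goal with
 | |- (fun _ => ?C) @ _ --> _ => apply: cvg_cst
 | |- (fun x => @?A x + @?B x) @ _ --> _ => apply: cvgD
 | |- (fun x => @?A x * @?B x) @ _ --> _ => apply: cvgM
 | |- (fun x => - @?A x) @ _ --> _ => apply: cvgN
 | |- (fun x => (@?A x)^-1) @ _ --> _ => apply: cvgV; first by rewrite mulf_neq0
 end.
all: first [exact: hb | exact: hs].
Qed.

Lemma mm_cont_ne b0 s0 : 1 < a -> 1 < b0 -> 0 <= s0 <= 1 -> b0 != a ->
  forall e, 0 < e -> exists2 r, 0 < r & forall b s, `|b0 - b| < r -> `|s0 - s| < r ->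
    1 < b -> 0 <= s <= 1 -> `|mm b0 s0 - mm b s| < e.
Proof.
move=> a1 b01 hs0 ba e e0.
case: (ltgtP a b0) => ab; last by rewrite ab eqxx in ba.
- have h : b0 - a * s0 != 0 by apply/lt0r_neq0; case/andP: hs0 => ? ?; nra.
  have [r r0 H] := @ed2 (fun b s => (b - a) * s / (b - a * s)) b0 s0
    (@f1_cvg _ _ _ _ _ b0 s0 h (@cvg_fst _ _ _ _ _) (@cvg_snd _ _ _ _ _)) e e0.
  exists (Num.min r (b0 - a)); first by rewrite lt_min r0 /=; lra.
  move=> b s; rewrite !lt_min => /andP[hb1 hb2] /andP[hs1 _] b1 hs.
  have ab' : a < b by have := ler_norm (b0 - b); lra.
  by rewrite !mmE // ab ab'; apply: H.
- have h1 : b0 != 0 by apply/lt0r_neq0; lra.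
  have h2 : a - 1 != 0 by apply/lt0r_neq0; lra.
  have [r r0 H] := @ed2 (fun b s => (a - b) * s / ((a - 1) * b)) b0 s0
    (@f3_cvg _ _ _ _ _ b0 s0 h1 h2 (@cvg_fst _ _ _ _ _) (@cvg_snd _ _ _ _ _)) e e0.
  exists (Num.min r (a - b0)); first by rewrite lt_min r0 /=; lra.
  move=> b s; rewrite !lt_min => /andP[hb1 hb2] /andP[hs1 _] b1 hs.
  have ab' : b < a by have := ler_norm (b - b0); rewrite distrC; lra.
  rewrite !mmE // (lt_gtF ab) (lt_gtF ab') (gt_eqF ab) (gt_eqF ab').
  exact: H.
Qed.

Lemma mm_aa s : 1 < a -> 0 <= s <= 1 -> mm a s = 0.
Proof. by move=> a1 hs; rewrite mmE // ltxx eqxx. Qed.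

Lemma mm_usc b0 s0 : 1 < a -> 1 < b0 -> 0 <= s0 <= 1 -> ~ (b0 = a /\ s0 = 1) ->
  forall e, 0 < e -> exists2 r, 0 < r & forall b s, `|b0 - b| < r -> `|s0 - s| < r ->
    1 < b -> 0 <= s <= 1 -> mm b s < mm b0 s0 + e.
Proof.
move=> a1 b01 hs0 nb e e0.
case: (eqVneq b0 a) => [eb|ne]; last first.
  have [r r0 H] := @mm_cont_ne b0 s0 a1 b01 hs0 ne e e0.
  exists r => // b s hb hs b1 hs'; have := H _ _ hb hs b1 hs'.
  by rewrite ltr_norml => /andP[h1 h2]; lra.
subst b0; rewrite mm_aa // add0r.
have s01 : s0 < 1 by case/andP: hs0 => _; rewrite le_eqVlt => /orP[/eqP h|//]; case: nb.
have [th [thE th0]] : exists th : R, th = (1 - s0) / 2 /\ 0 < th.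
  by exists ((1 - s0) / 2); split => //; lra.
exists (Num.min th (Num.min (e * (a - 1) / 2) (e * a * th / 2))).
  rewrite !lt_min th0 /=; apply/andP; split; apply: divr_gt0 => //;
    apply: mulr_gt0 => //; try lra; apply: mulr_gt0; lra.
move=> b s; rewrite !lt_min => /and3P[hb1 hb2 hb3] /andP[hs1 _] b1 /andP[s0' s1].
have n1 := ler_norm (a - b); have n2 := ler_norm (b - a); rewrite distrC in n2.
have n3 := ler_norm (s - s0); rewrite distrC in n3.
rewrite mmE //; last by rewrite s0' s1.
case: (ltgtP a b) => ab.
- have hs : 1 - s > th by lra.
  have h : 0 < b - a * s by nra.
  rewrite ltr_pdivrMr //.
  have q1 : (b - a) * s <= b - a by nra.
  have q2 : e * (a * th) <= e * (a * (1 - s)).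
    by rewrite ler_pM2l // ler_pM2l ?ltW //; lra.
  have q3 : e * (a * (1 - s)) <= e * (b - a * s) by rewrite ler_pM2l //; nra.
  have q5 : 0 < e * a * th by apply: mulr_gt0 => //; apply: mulr_gt0; lra.
  have q4 : e * a * th / 2 <= e * (a * th) by rewrite mulrA ler_pdivrMr //; nra.
  lra.
- have h : 0 < (a - 1) * b by apply: mulr_gt0; lra.
  rewrite ltr_pdivrMr //.
  have q1 : (a - b) * s <= a - b by nra.
  have q2 : e * (a - 1) <= e * ((a - 1) * b) by rewrite ler_pM2l //; nra.
  have q5 : 0 < e * (a - 1) by apply: mulr_gt0; lra.
  have q4 : e * (a - 1) / 2 <= e * (a - 1) by rewrite ler_pdivrMr //; nra.
  lra.
- by [].
Qed.

Lemma mm_lsc b0 s0 : 1 < a -> 1 < b0 -> 0 <= s0 <= 1 ->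
  forall e, 0 < e -> exists2 r, 0 < r & forall b, `|b0 - b| < r ->
    1 < b -> mm b0 s0 < mm b s0 + e.
Proof.
move=> a1 b01 hs0 e e0.
case: (eqVneq b0 a) => [eb|ne]; last first.
  have [r r0 H] := @mm_cont_ne b0 s0 a1 b01 hs0 ne e e0.
  exists r => // b hb b1; have := H _ _ hb _ b1 hs0.
  rewrite subrr normr0 => /(_ r0).
  by rewrite ltr_norml => /andP[h1 h2]; lra.
subst b0; exists 1 => // b _ b1; rewrite mm_aa //.
by have /andP[h _] := @mm_bounds b s0 a1 b1 hs0; lra.
Qed.

Lemma phiM (u w : R) : 0 <= u -> 0 <= w -> phi (u * w) = w * phi u + u * phi w.
Proof.
move=> u0 w0.
have [->|un] := eqVneq u 0; first by rewrite mul0r phi0 mulr0 mul0r addr0.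
have [->|wn] := eqVneq w 0; first by rewrite mulr0 phi0 mulr0 mul0r addr0.
have up : 0 < u by rewrite lt_neqAle eq_sym un u0.
have wp : 0 < w by rewrite lt_neqAle eq_sym wn w0.
by rewrite /phi lnM ?posrE //; ring.
Qed.

Lemma mixH (u X : R) : 0 < u -> 0 <= X <= u ->
  u * Hent (X / u) = phi u - phi X - phi (u - X).
Proof.
move=> u0 /andP[X0 Xu].
have [w wE] : exists w, w = X / u by eexists.
rewrite -wE.
have w0 : 0 <= w by rewrite wE divr_ge0 // ltW.
have w1 : 0 <= 1 - w by rewrite wE subr_ge0 ler_pdivrMr // mul1r.
have eX : X = u * w by rewrite wE mulrC divfK // gt_eqF.
have eY : u - X = u * (1 - w) by rewrite eX; ring.
rewrite eY eX !phiM ?(ltW u0) // HentE; ring.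
Qed.

Lemma dom_X b s t : 1 < a -> 1 < b -> 0 <= s <= 1 -> mm b s <= t <= s ->
  0 <= t /\ 0 <= (1 - b / a) * (s / b) + t / a <= t.
Proof.
move=> a1 b1 hs /andP[mt ts].
have /andP[m0 ms] := @mm_bounds b s a1 b1 hs.
have t0 : 0 <= t by lra.
split => //.
have eX : (1 - b / a) * (s / b) + t / a = ((a - b) * s + b * t) / (a * b).
  by field; apply/andP; split; apply/lt0r_neq0; lra.
have ab0 : 0 < a * b by apply: mulr_gt0; lra.
rewrite eX ler_pdivlMr // mul0r ler_pdivrMr //.
move: mt; rewrite mmE //; case/andP: hs => s0 s1.
case: (ltgtP a b) => ab mt.
- have h : 0 < b - a * s by nra.
  rewrite ler_pdivrMr // in mt.
  have q : 0 <= t * (a * s) by apply: mulr_ge0 => //; apply: mulr_ge0; lra.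
  have q2 : 0 <= b * t * (a - 1) by apply: mulr_ge0; [apply: mulr_ge0|]; lra.
  apply/andP; split; nra.
- have h : 0 < (a - 1) * b by apply: mulr_gt0; lra.
  rewrite ler_pdivrMr // in mt.
  apply/andP; split; nra.
- subst b; rewrite subrr mul0r add0r.
  have q : 0 <= t * a * (a - 1) by apply: mulr_ge0; [apply: mulr_ge0|]; lra.
  apply/andP; split; nra.
Qed.
End Main.


Section Main2.
Variables (R : realType) (a c : R).
Local Notation mm := (@mm R a).
Local Notation mm_bounds := (@mm_bounds R a).
Local Notation mm_usc := (@mm_usc R a).
Local Notation mm_lsc := (@mm_lsc R a).
Local Notation mm_aa := (@mm_aa R a).
Local Notation mmE := (@mmE R a).
Local Notation dom_X := (@dom_X R a).
Local Notation Phi := (@Phi R a c).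
Local Notation Phi_ed := (@Phi_ed R a c).

Lemma gPhi b s t : 1 < a -> 1 < b -> 0 <= s <= 1 -> mm b s <= t <= s ->
  g_abc a b c (s / b) t = Phi b s t.
Proof.
move=> a1 b1 hs hts.
have [t0 /andP[X0 Xt]] := dom_X b s t a1 b1 hs hts.
have t1 : t <= 1 by case/andP: hs => _ ?; case/andP: hts => _ ?; lra.
have bs : b * (s / b) = s by rewrite mulrC divfK // gt_eqF //; lra.
have Y0 : 0 <= (b * (s / b) - t) / a.
  by rewrite bs divr_ge0 //; case/andP: hts => _ ?; lra.
have Y1 : (b * (s / b) - t) / a <= 1 - t.
  rewrite bs ler_pdivrMr; last by lra.
  have q : 0 <= (a - 1) * (1 - t) by apply: mulr_ge0; lra.
  case/andP: hs => _ ?; nra.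
rewrite /g_abc /Phi /Gf.
have E1 : t * Hent (gamma_ab a b (s / b) t) =
    phi t - phi ((1 - b / a) * (s / b) + t / a)
    - phi (t - ((1 - b / a) * (s / b) + t / a)).
  rewrite /gamma_ab; case: (eqVneq t 0) => [tz|tn] /=.
    have Xz : (1 - b / a) * (s / b) + t / a = 0 by lra.
    by rewrite Xz tz ?subrr ?subr0 ?phi0 ?mul0r ?subrr ?subr0.
  have tp : 0 < t by rewrite lt_neqAle eq_sym tn t0.
  rewrite -mixH //; last by rewrite X0 Xt.
  congr (t * Hent _); field; by repeat (apply/andP; split); apply/lt0r_neq0; lra.
have E2 : (1 - t) * Hent (delta_ab a b (s / b) t) =
    phi (1 - t) - phi ((b * (s / b) - t) / a) - phi (1 - t - (b * (s / b) - t) / a).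
  rewrite /delta_ab; case: (eqVneq t 1) => [tz|tn] /=.
    have Yz : (b * (s / b) - t) / a = 0 by lra.
    by rewrite Yz tz ?subrr ?subr0 ?phi0 ?mul0r ?subrr ?subr0.
  have tp : 0 < 1 - t by rewrite subr_gt0 lt_neqAle tn t1.
  rewrite -mixH //; last by rewrite Y0 Y1.
  congr ((1 - t) * Hent _); field; by repeat (apply/andP; split); apply/lt0r_neq0; lra.
rewrite E1 E2 HentE; ring.
Qed.
End Main2.


Section Cover.
Variable R : realType.
Lemma cover01 (P : R -> R -> Prop) (b0 : R) :
  (forall x, 0 <= x <= 1 -> exists2 r, 0 < r &
     forall y b, `|x - y| < r -> `|b0 - b| < r -> 0 <= y <= 1 -> P b y) ->
  exists2 d, 0 < d & forall b y, `|b0 - b| < d -> 0 <= y <= 1 -> P b y.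
Proof.
move=> loc.
have nc := (compact_near_coveringP `[(0:R), 1]).1 (@segment_compact R 0 1).
have ncw := (near_covering_withinP `[(0:R), 1]).2 nc.
have := ncw R (nbhs b0) P _.
case.
- move=> x; rewrite /= in_itv /= => hx.
  have [r r0 H] := loc x hx.
  exists (ball x r, ball b0 r); first by split; apply: nbhsx_ballx.
  case=> y b /= [hy hb]; rewrite in_itv /= => hy'.
  exact: H.
- move=> B /= hB sub.
  exists B => // b y hb hy; apply: (sub b hb).
  by rewrite /= in_itv /=.
Qed.
End Cover.

Section Main3.
Variables (R : realType) (a c : R).
Local Notation mm := (@mm R a).
Local Notation mm_bounds := (@mm_bounds R a).
Local Notation mm_usc := (@mm_usc R a).
Local Notation mm_lsc := (@mm_lsc R a).
Local Notation mm_aa := (@mm_aa R a).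
Local Notation mmE := (@mmE R a).
Local Notation dom_X := (@dom_X R a).
Local Notation Phi := (@Phi R a c).
Local Notation Phi_ed := (@Phi_ed R a c).
Local Notation gPhi := (@gPhi R a c).

Lemma phi_b (z : R) : 0 <= z <= 1 -> -1 <= phi z /\ phi z <= 0.
Proof. by move=> hz; split; [apply: phi_ge; case/andP: hz | apply: phi_le0]. Qed.

Lemma Phi_bounds b s t : 1 < a -> 1 < c -> 1 < b -> 0 <= s <= 1 -> mm b s <= t <= s ->
  -4 <= Phi b s t /\ Phi b s t <= ln c + 4.
Proof.
move=> a1 c1 b1 hs hts.
have [t0 /andP[X0 Xt]] := dom_X b s t a1 b1 hs hts.
case/andP: hs => s0 s1; case/andP: hts => ms ts.
have t1 : t <= 1 by lra.
have bs : b * (s / b) = s by rewrite mulrC divfK // gt_eqF //; lra.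
have Y0 : 0 <= (b * (s / b) - t) / a by rewrite bs divr_ge0 //; lra.
have Y1 : (b * (s / b) - t) / a <= 1 - t.
  rewrite bs ler_pdivrMr; last by lra.
  have q : 0 <= (a - 1) * (1 - t) by apply: mulr_ge0; lra.
  nra.
have k0 : 0 <= s / b by rewrite divr_ge0 //; lra.
have k1 : s / b <= 1 by rewrite ler_pdivrMr ?mul1r; lra.
have lc : 0 <= ln c by apply: ln_ge0; lra.
have A0 : 0 <= (b * (s / b) - t) / a * ln c by apply: mulr_ge0.
have A1 : (b * (s / b) - t) / a * ln c <= ln c.
  apply: ler_piMl => //; rewrite bs ler_pdivrMr ?mul1r; lra.
rewrite /Phi /Gf.
set X := (1 - b / a) * (s / b) + t / a.
set Y := (b * (s / b) - t) / a.
have [p1 p1'] := @phi_b t ltac:(apply/andP; split; lra).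
have [p2 p2'] := @phi_b X ltac:(rewrite /X; apply/andP; split; lra).
have [p3 p3'] := @phi_b (t - X) ltac:(rewrite /X; apply/andP; split; lra).
have [p4 p4'] := @phi_b (1 - t) ltac:(apply/andP; split; lra).
have [p5 p5'] := @phi_b Y ltac:(rewrite /Y; apply/andP; split; lra).
have [p6 p6'] := @phi_b (1 - t - Y) ltac:(rewrite /Y; apply/andP; split; lra).
have [p7 p7'] := @phi_b (s / b) ltac:(apply/andP; split; lra).
have [p8 p8'] := @phi_b (1 - s / b) ltac:(apply/andP; split; lra).
rewrite -/Y in A0 A1; split; lra.
Qed.

Definition I b s := inf [set Phi b s t | t in `[mm b s, s]].
Definition Fm b := sup [set I b s | s in `[0, 1]].

Lemma I_lbd b s : 1 < a -> 1 < c -> 1 < b -> 0 <= s <= 1 ->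
  has_lbound [set Phi b s t | t in `[mm b s, s]].
Proof.
move=> a1 c1 b1 hs; exists (-4) => _ [t ht <-].
rewrite /= in_itv /= in ht.
by case: (Phi_bounds _ _ _ a1 c1 b1 hs ht).
Qed.

Lemma I_le b s t : 1 < a -> 1 < c -> 1 < b -> 0 <= s <= 1 -> mm b s <= t <= s ->
  I b s <= Phi b s t.
Proof.
move=> a1 c1 b1 hs ht; apply: (ge_inf (I_lbd _ _ a1 c1 b1 hs)).
by exists t => //; rewrite /= in_itv /=.
Qed.

Lemma I_glb b s x : 1 < a -> 1 < b -> 0 <= s <= 1 ->
  (forall t, mm b s <= t <= s -> x <= Phi b s t) -> x <= I b s.
Proof.
move=> a1 b1 hs H; apply: lb_le_inf.
  exists (Phi b s s), s => //; rewrite /= in_itv /= lexx andbT.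
  by case/andP: (mm_bounds b s a1 b1 hs).
move=> _ [t ht <-]; apply: H; by rewrite /= in_itv /= in ht.
Qed.

Lemma I_lt b s x : 1 < a -> 1 < b -> 0 <= s <= 1 -> I b s < x ->
  exists t, mm b s <= t <= s /\ Phi b s t < x.
Proof.
move=> a1 b1 hs hx.
have ne : [set Phi b s t | t in `[mm b s, s]] !=set0.
  exists (Phi b s s), s => //; rewrite /= in_itv /= lexx andbT.
  by case/andP: (mm_bounds b s a1 b1 hs).
have [_ [t ht <-] h] := inf_lt ne hx.
by exists t; split => //; rewrite /= in_itv /= in ht.
Qed.

Lemma I_bd b s : 1 < a -> 1 < c -> 1 < b -> 0 <= s <= 1 ->
  -4 <= I b s /\ I b s <= ln c + 4.
Proof.
move=> a1 c1 b1 hs.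
have hss : mm b s <= s <= s by rewrite lexx andbT; case/andP: (mm_bounds b s a1 b1 hs).
split.
  apply: I_glb => // t ht; by case: (Phi_bounds _ _ _ a1 c1 b1 hs ht).
apply: le_trans (I_le _ _ _ a1 c1 b1 hs hss) _.
by case: (Phi_bounds _ _ _ a1 c1 b1 hs hss).
Qed.

Lemma F_ge b s : 1 < a -> 1 < c -> 1 < b -> 0 <= s <= 1 -> I b s <= Fm b.
Proof.
move=> a1 c1 b1 hs; apply: ub_le_sup.
  exists (ln c + 4) => _ [s' hs' <-].
  rewrite /= in_itv /= in hs'.
  by case: (I_bd _ _ a1 c1 b1 hs').
by exists s => //; rewrite /= in_itv /=.
Qed.

Lemma F_lub b x : (forall s, 0 <= s <= 1 -> I b s <= x) -> Fm b <= x.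
Proof.
move=> H; apply: ge_sup.
  by exists (I b 0), 0 => //; rewrite /= in_itv /= lexx ler01.
move=> _ [s hs <-]; apply: H; by rewrite /= in_itv /= in hs.
Qed.

Lemma F_lt b x : x < Fm b -> exists s, 0 <= s <= 1 /\ x < I b s.
Proof.
move=> hx.
have ne : [set I b s | s in `[0, 1]] !=set0.
  by exists (I b 0), 0 => //; rewrite /= in_itv /= lexx ler01.
have [_ [s hs <-] h] := sup_gt ne hx.
by exists s; split => //; rewrite /= in_itv /= in hs.
Qed.
End Main3.


Section Main4.
Variables (R : realType) (a c : R).
Local Notation mm := (@mm R a).
Local Notation mm_bounds := (@mm_bounds R a).
Local Notation mm_usc := (@mm_usc R a).
Local Notation mm_lsc := (@mm_lsc R a).
Local Notation mm_aa := (@mm_aa R a).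
Local Notation Phi := (@Phi R a c).
Local Notation Phi_ed := (@Phi_ed R a c).
Local Notation gPhi := (@gPhi R a c).
Local Notation I := (@I R a c).
Local Notation Fm := (@Fm R a c).
Local Notation I_le := (@I_le R a c).
Local Notation I_glb := (@I_glb R a c).
Local Notation I_lt := (@I_lt R a c).
Local Notation F_ge := (@F_ge R a c).
Local Notation F_lub := (@F_lub R a c).
Local Notation F_lt := (@F_lt R a c).

Lemma Phi00 b : Phi b 0 0 = 0.
Proof.
rewrite /Phi /Gf mul0r.
have e1 : (1 - b / a) * 0 + 0 / a = 0 :> R by rewrite mulr0 mul0r addr0.
have e2 : (b * 0 - 0) / a = 0 :> R by rewrite mulr0 subr0 mul0r.
rewrite e1 e2 !subr0 phi0 phi1; ring.
Qed.

Lemma Phiaa : 1 < a -> Phi a 1 1 = 0.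
Proof.
move=> a1; have a0 : a != 0 by apply/lt0r_neq0; lra.
rewrite /Phi /Gf.
have e1 : (a * (1 / a) - 1) / a = 0 by field.
have e2 : (1 - a / a) * (1 / a) + 1 / a = 1 / a by field.
have e3 : (1 : R) - 1 = 0 by ring.
rewrite e1 e2 e3 !subr0 phi0 phi1 mul0r; ring.
Qed.

Lemma Fm_ge0 b : 1 < a -> 1 < c -> 1 < b -> 0 <= Fm b.
Proof.
move=> a1 c1 b1.
have h01 : 0 <= (0:R) <= 1 by apply/andP; split; lra.
apply: le_trans (F_ge b 0 a1 c1 b1 h01).
apply: I_glb => // t /andP[ht1 ht2].
have /andP[m0 _] := mm_bounds b 0 a1 b1 h01.
have -> : t = 0 by lra.
by rewrite Phi00.
Qed.

Lemma F_lsc b0 : 1 < a -> 1 < c -> 1 < b0 -> forall e, 0 < e ->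
  exists2 d, 0 < d & forall b, `|b0 - b| < d -> 1 < b -> Fm b0 - e < Fm b.
Proof.
move=> a1 c1 b01 e e0.
have [s0 [hs0 hI]] := F_lt b0 (Fm b0 - e / 2) ltac:(lra).
have b00 : b0 != 0 by apply/lt0r_neq0; lra.
pose P := fun b t => 1 < b -> mm b s0 <= t <= s0 -> I b0 s0 - e / 2 <= Phi b s0 t.
have [d1 d10 H1] : exists2 d, 0 < d & forall b y, `|b0 - b| < d -> 0 <= y <= 1 -> P b y.
  apply: cover01 => x hx; rewrite /P.
  case: (leP (mm b0 s0) x) => hmx; [case: (leP x s0) => hxs|].
  - have [r r0 H] := Phi_ed b0 s0 x b00 (e / 2) ltac:(lra).
    exists r => // y b hy hb _ b1 _.
    have := H b s0 y hb ltac:(by rewrite subrr normr0) hy.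
    have := I_le b0 s0 x a1 c1 b01 hs0 ltac:(by rewrite hmx hxs).
    rewrite ltr_norml => h1 /andP[h2 h3]; lra.
  - exists (x - s0); first lra.
    move=> y b hy _ _ b1 /andP[_ hys].
    have := ler_norm (x - y); lra.
  - have [r r0 H] := mm_lsc b0 s0 a1 b01 hs0 ((mm b0 s0 - x) / 2) ltac:(lra).
    exists (Num.min r ((mm b0 s0 - x) / 2)); first by rewrite lt_min r0 /=; lra.
    move=> y b; rewrite !lt_min => /andP[hy1 hy2] /andP[hb1 hb2] _ b1 /andP[hmy _].
    have := H b hb1 b1.
    have := ler_norm (y - x); rewrite distrC; lra.
exists d1 => // b hb b1.
have hs0' := hs0; case/andP: hs0' => s00 s01.
have : I b0 s0 - e / 2 <= I b s0.
  apply: I_glb => // t ht; apply: H1 => //.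
  have /andP[m0 _] := mm_bounds b s0 a1 b1 hs0.
  case/andP: ht => ht1 ht2; apply/andP; split; lra.
have := F_ge b s0 a1 c1 b1 hs0; lra.
Qed.

Lemma F_usc b0 : 1 < a -> 1 < c -> 1 < b0 -> forall e, 0 < e ->
  exists2 d, 0 < d & forall b, `|b0 - b| < d -> 1 < b -> Fm b <= Fm b0 + e.
Proof.
move=> a1 c1 b01 e e0.
have b00 : b0 != 0 by apply/lt0r_neq0; lra.
pose P := fun b s => 1 < b -> exists t, mm b s <= t <= s /\ Phi b s t < Fm b0 + e.
have [d2 d20 H2] : exists2 d, 0 < d & forall b y, `|b0 - b| < d -> 0 <= y <= 1 -> P b y.
  apply: cover01 => x hx; rewrite /P.
  case: (boolP ((b0 == a) && (x == 1))) => [/andP[/eqP eb /eqP ex]| hn].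
  - subst b0 x.
    have [r r0 H] := Phi_ed a 1 1 b00 e e0.
    exists r => // y b hy hb hy01 b1.
    exists y; split.
      by rewrite lexx andbT; case/andP: (mm_bounds b y a1 b1 hy01).
    have := H b y y hb hy hy; rewrite Phiaa // sub0r normrN => h.
    have := ler_norm (Phi b y y); have := Fm_ge0 a a1 c1 b01; lra.
  - have hn' : ~ (b0 = a /\ x = 1) by move=> [e1 e2]; subst; rewrite !eqxx in hn.
    have hIx := F_ge b0 x a1 c1 b01 hx.
    have [ts [hts hPt]] := I_lt b0 x (Fm b0 + e / 2) a1 b01 hx ltac:(lra).
    have [r1 r10 H1] := Phi_ed b0 x ts b00 (e / 2) ltac:(lra).
    have [r2 r20 H2] := mm_usc b0 x a1 b01 hx hn' (r1 / 2) ltac:(lra).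
    exists (Num.min (r1 / 2) r2); first by rewrite lt_min r20 andbT; lra.
    move=> y b; rewrite !lt_min => /andP[hy1 hy2] /andP[hb1 hb2] hy01 b1.
    have hm := H2 b y hb2 hy2 b1 hy01.
    have /andP[m0 my] := mm_bounds b y a1 b1 hy01.
    case/andP: hts => hmt htx.
    have n1 := ler_norm (x - y); have n2 := ler_norm (y - x); rewrite distrC in n2.
    have hb' : `|b0 - b| < r1 by lra.
    have hy' : `|x - y| < r1 by lra.
    have fin : forall t, mm b y <= t <= y -> `|ts - t| < r1 ->
        exists t, mm b y <= t <= y /\ Phi b y t < Fm b0 + e.
      move=> t ht htt; exists t; split => //.
      have := H1 b y t hb' hy' htt; rewrite ltr_norml => /andP[h1 h2]; lra.
    case: (leP (mm b y) ts) => h1; [case: (leP ts y) => h2|].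
    + apply: (fin ts); first by rewrite h1 h2.
      by rewrite subrr normr0.
    + apply: (fin y); first by rewrite my lexx.
      rewrite ltr_norml; apply/andP; split; lra.
    + apply: (fin (mm b y)); first by rewrite lexx my.
      rewrite ltr_norml; apply/andP; split; lra.
exists d2 => // b hb b1.
apply: F_lub => s hs.
have [t [ht hPt]] := H2 b s hb hs b1.
exact: le_trans (I_le b s t a1 c1 b1 hs ht) (ltW hPt).
Qed.

Lemma F_cont b0 : 1 < a -> 1 < c -> 1 < b0 -> forall e, 0 < e ->
  exists2 d, 0 < d & forall b, `|b0 - b| < d -> `|Fm b0 - Fm b| < e.
Proof.
move=> a1 c1 b01 e e0.
have [d1 d10 H1] := F_lsc b0 a1 c1 b01 e e0.
have [d2 d20 H2] := F_usc b0 a1 c1 b01 (e / 2) ltac:(lra).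
exists (Num.min (b0 - 1) (Num.min d1 d2)).
  by rewrite !lt_min d10 d20 /= andbT; lra.
move=> b; rewrite !lt_min => /and3P[hb0 hb1 hb2].
have b1 : 1 < b by have := ler_norm (b0 - b); lra.
have := H1 b hb1 b1; have := H2 b hb2 b1.
rewrite ltr_norml => h1 h2; apply/andP; split; lra.
Qed.
End Main4.


Section Main5.
Variables (R : realType) (a c : R).
Local Notation mm := (@mm R a).
Local Notation Phi := (@Phi R a c).
Local Notation gPhi := (@gPhi R a c).
Local Notation I := (@I R a c).
Local Notation Fm := (@Fm R a c).

Lemma inner_I b s : 1 < a -> 1 < b -> 0 <= s <= 1 -> inner_min a b c (s / b) = I b s.
Proof.
move=> a1 b1 hs.
have bs : b * (s / b) = s by rewrite mulrC divfK // gt_eqF //; lra.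
rewrite /inner_min /I bs; congr inf; apply/seteqP; split => _ [t ht <-]; exists t => //.
  by rewrite gPhi //; rewrite /= in_itv /= in ht.
by rewrite gPhi //; rewrite /= in_itv /= in ht.
Qed.

Lemma amlsE b : 1 < a -> 1 < b -> amls a c b = expR (Fm b).
Proof.
move=> a1 b1; rewrite /amls /Fm; congr (expR (sup _)).
have b0 : b != 0 by apply/lt0r_neq0; lra.
apply/seteqP; split => _ [x hx <-]; rewrite /= in_itv /= in hx; case/andP: hx => x0 x1.
- exists (b * x).
    rewrite /= in_itv /=; apply/andP; split; first by apply: mulr_ge0 => //; lra.
    by rewrite -(mulfV b0) ler_pM2l //; lra.
  rewrite -inner_I //; first by congr (inner_min _ _ _ _); field.
  apply/andP; split; first by apply: mulr_ge0 => //; lra.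
  by rewrite -(mulfV b0) ler_pM2l //; lra.
- exists (x / b).
    rewrite /= in_itv /=; apply/andP; split; first by apply: divr_ge0 => //; lra.
    by rewrite ler_pdivrMr ?mulVf //; lra.
  by rewrite inner_I // x0 x1.
Qed.
End Main5.

Theorem lemma5p6 (R : realType) (alpha c : R) :
  1 < alpha -> 1 < c ->
  {within [set x : R | 1 < x], continuous (fun x : R => amls alpha c x)}.
Proof.
move=> a1 c1; apply: continuous_in_subspaceT => b0; rewrite inE /= => b01.
have hF : @Fm R alpha c @ nbhs b0 --> @Fm R alpha c b0.
  apply/cvgrPdist_lt => e e0; apply/nbhs_ballP.
  have [d d0 H] := @F_cont R alpha c b0 a1 c1 b01 e e0.
  by exists d => // b /= hb; apply: H.
have hE : (fun x => expR (@Fm R alpha c x)) @ nbhs b0 --> expR (@Fm R alpha c b0).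
  exact: (continuous_cvg _ (@continuous_expR R _) hF).
rewrite /prop_for /continuous_at amlsE //.
apply: cvg_trans hE; apply: near_eq_cvg.
apply/nbhs_ballP; exists (b0 - 1) => /=; first by lra.
move=> b /= hb; rewrite amlsE //.
have := ler_norm (b0 - b); lra.
Qed.
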